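(* Let $\alpha$ be a composition and $n\ge1$. Then $$\{w(\alpha): w\in CRHW_n,\ w(\alpha)\neq0\}=\{\beta:\ \alpha<_c\beta \text{ and } \beta/\!\!/\alpha \text{ is an nc border strip with } n \text{ boxes}\}.$$
   Context: A composition is a finite sequence $\alpha=(\alpha_1,\dots,\alpha_k)$ of positive integers; $\ell(\alpha)=k$. Its diagram is the set of boxes $(i,j)$, $1\le i\le\ell(\alpha)$, $1\le j\le\alpha_i$, rows numbered top to bottom, columns left to right. For compositions $\gamma=(\gamma_1,\dots,\gamma_l)$, $\delta$ write $\gamma\lessdot_c\delta$ if $\delta=(1,\gamma_1,\dots,\gamma_l)$ or $\delta=(\gamma_1,\dots,\gamma_k+1,\dots,\gamma_l)$ for some $k$ with $\gamma_i\neq\gamma_k$ for all $i<k$; $<_c$ is the transitive closure. For $\gamma<_c\delta$, $\delta/\!\!/\gamma$ is the set of boxes of $\delta$ not in the inner shape, the inner shape being the boxes $(\ell(\delta)-\ell(\gamma)+i,j)$, $1\le i\le\ell(\gamma)$, $1\le j\le\gamma_i$. $\mathrm{supp}(\beta/\!\!/\alpha)$ is the set of columns containing a box of $\beta/\!\!/\alpha$; $\beta/\!\!/\alpha$ is an interval shape if this set is a set of consecutive integers. An interval shape is an nc border strip if (1) whenever $(i,1),(i,2)\in\beta/\!\!/\alpha$, the box $(i,1)$ is the bottommost box of column 1 of $\beta/\!\!/\alpha$, and (2) whenever $(i,j),(i,j+1)\in\beta/\!\!/\alpha$ with $j\ge2$, the box $(i,j)$ is the topmost box of column $j$ of $\beta/\!\!/\alpha$.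 Box-adding operators: $\mathfrak t_1(\alpha)=(1,\alpha_1,\dots,\alpha_k)$; for $i\ge2$, $\mathfrak t_i(\alpha)$ increases the leftmost part of $\alpha$ equal to $i-1$ by $1$, and is $0$ if there is no such part; $\mathfrak t_i(0)=0$. A word $w=\mathfrak t_{i_1}\cdots\mathfrak t_{i_n}$ acts by $w(\alpha)=\mathfrak t_{i_1}(\cdots\mathfrak t_{i_n}(\alpha))$. It is a reverse hookword if $i_1\le\cdots\le i_{k+1}>i_{k+2}>\cdots>i_n$ for some $0\le k\le n-1$, connected if $\{i_1,\dots,i_n\}$ is a set of consecutive integers; $CRHW_n$ is the set of connected reverse hookwords of length $n$. *)

(* Defs.v *)
From mathcomp Require Import all_boot.
From Stdlib Require Import Relations.Relation_Operators.
Set Implicit Arguments. Unset Strict Implicit. Unset Printing Implicit Defensive.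

Definition composition (a : seq nat) : bool := all (fun x => 0 < x) a.

(* Part alpha_k (1-indexed) is nth 0 a k.-1; here we use 0-indexed k. *)
Definition cover_c (g d : seq nat) : Prop :=
  d = 1 :: g \/
  exists k, k < size g /\
    (forall i, i < k -> nth 0 g i != nth 0 g k) /\
    d = set_nth 0 g k (nth 0 g k).+1.

Definition lt_c (g d : seq nat) : Prop := clos_trans (seq nat) cover_c g d.

(* Boxes are pairs (row, column), 1-indexed, rows top to bottom. *)
Definition in_diagram (d : seq nat) (b : nat * nat) : bool :=
  [&& 1 <= b.1, b.1 <= size d, 1 <= b.2 & b.2 <= nth 0 d b.1.-1].

Definition in_inner (d g : seq nat) (b : nat * nat) : bool :=
  [&& size d - size g < b.1, b.1 <= size d, 1 <= b.2 &
      b.2 <= nth 0 g (b.1 - (size d - size g)).-1].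

Definition in_skew (d g : seq nat) (b : nat * nat) : bool :=
  in_diagram d b && ~~ in_inner d g b.

Definition skew_boxes (d g : seq nat) : seq (nat * nat) :=
  [seq b <- flatten [seq [seq (i, j) | j <- iota 1 (nth 0 d i.-1)]
                    | i <- iota 1 (size d)] | ~~ in_inner d g b].

Definition in_supp (d g : seq nat) (j : nat) : Prop :=
  exists i, in_skew d g (i, j).

Definition interval_shape (d g : seq nat) : Prop :=
  forall j1 j j2, in_supp d g j1 -> in_supp d g j2 -> j1 <= j <= j2 ->
    in_supp d g j.

Definition nc_border_strip (d g : seq nat) : Prop :=
  interval_shape d g /\
  (forall i, in_skew d g (i, 1) -> in_skew d g (i, 2) ->
     forall i', in_skew d g (i', 1) -> i' <= i) /\
  (forall i j, 2 <= j -> in_skew d g (i, j) -> in_skew d g (i, j.+1) ->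
     forall i', in_skew d g (i', j) -> i <= i').

(* Box-adding operators; None plays the role of 0.  Letters are >= 1;
   t_0 is not used (and is set to 0). *)
Definition t_op (i : nat) (a : seq nat) : option (seq nat) :=
  match i with
  | 0 => None
  | 1 => Some (1 :: a)
  | i'.+1 => if i' \in a then
               Some (set_nth 0 a (index i' a) (nth 0 a (index i' a)).+1)
             else None
  end.

(* w = t_{i1} ... t_{in} acting by w(a) = t_{i1}(... t_{in}(a)) *)
Definition act (w : seq nat) (a : seq nat) : option (seq nat) :=
  foldr (fun i acc => obind (t_op i) acc) (Some a) w.

Definition reverse_hookword (w : seq nat) : Prop :=
  exists k, k < size w /\ sorted leq (take k.+1 w) /\
            sorted (fun a b => b < a) (drop k w).

Definition connected_word (w : seq nat) : Prop :=
  forall a b c, a \in w -> c \in w -> a <= b <= c -> b \in w.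

Definition CRHW (n : nat) (w : seq nat) : Prop :=
  size w = n /\ all (fun i => 0 < i) w /\ reverse_hookword w /\ connected_word w.

(* Main.v *)
Require Import Defs.
From mathcomp Require Import all_boot zify.
From Stdlib Require Import Relations.Relation_Operators Classical_Prop.
Set Implicit Arguments. Unset Strict Implicit. Unset Printing Implicit Defensive.

Section Box.
Variable a : seq nat.

Definition Lg (b : seq nat) := size b - size a.
Definition inn (b : seq nat) r := if r < Lg b then 0 else nth 0 a (r - Lg b).
Definition box (b : seq nat) r c := [&& r < size b, inn b r < c & c <= nth 0 b r].

Lemma in_skewE b i j : in_skew b a (i, j) = (0 < i) && box b i.-1 j.
Proof.
rewrite /in_skew /in_diagram /in_inner /box /inn /Lg /=.
case: i => [|i] //=.
case: (ltnP i (size b - size a)) => Hi.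
- have -> : (size b - size a < i.+1) = false by lia.
  rewrite /=. case: (i < size b) => //=; lia.
- have -> : (size b - size a < i.+1) = true by lia.
  have -> : (i.+1 - (size b - size a)).-1 = i - (size b - size a) by lia.
  case: (i < size b) => //=.
  case: (ltnP j 1) => Hj /=; lia.
Qed.
End Box.

Lemma t_opS x b b' : t_op x b = Some b' ->
  (x = 1 /\ b' = 1 :: b) \/
  (1 < x /\ index x.-1 b < size b /\ nth 0 b (index x.-1 b) = x.-1 /\
   b' = set_nth 0 b (index x.-1 b) x).
Proof.
case: x => [|[|i]] //=; first by move=> [<-]; left.
case: ifP => // Hin [<-]; right.
by rewrite index_mem Hin nth_index.
Qed.

Lemma t_op_pos x b b' : t_op x b = Some b' -> 0 < x.
Proof. by case: x. Qed.

Section Box2.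
Variable a : seq nat.

Definition Cont (b : seq nat) :=
  size a <= size b /\ forall r, r < size b -> inn a b r <= nth 0 b r.

Lemma size_set b k v : k < size b -> size (set_nth 0 b k v) = size b.
Proof. by move=> H; rewrite size_set_nth; apply/maxn_idPr. Qed.

Lemma inn_set b k v r : k < size b -> inn a (set_nth 0 b k v) r = inn a b r.
Proof. by move=> H; rewrite /inn /Lg size_set. Qed.

Lemma box_set b k x r c : k < size b -> inn a b k <= x.-1 -> 0 < x ->
  nth 0 b k = x.-1 ->
  box a (set_nth 0 b k x) r c = box a b r c || ((r == k) && (c == x)).
Proof.
move=> Hk Hi Hx Hn; rewrite /box inn_set // size_set // nth_set_nth /=.
case: eqP => [->|Hrk] /=; last by rewrite orbF.
rewrite Hk /=.
case: (ltnP (inn a b k) c) => Hc /=; last by apply/esym/eqP; lia.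
case: eqP => [->|]; first by rewrite leqnn orbT.
move=> Hne; rewrite orbF; apply/idP/idP; lia.
Qed.

Lemma inn_cons0 b : size a <= size b -> inn a (1 :: b) 0 = 0.
Proof. by move=> H; rewrite /inn /Lg /=; have -> : 0 < (size b).+1 - size a by lia. Qed.

Lemma inn_consS b r : size a <= size b -> inn a (1 :: b) r.+1 = inn a b r.
Proof.
move=> H; rewrite /inn /Lg /=.
have -> : (r.+1 < (size b).+1 - size a) = (r < size b - size a) by lia.
case: ltnP => // _; congr nth; lia.
Qed.

Lemma box_cons0 b c : size a <= size b -> box a (1 :: b) 0 c = (c == 1).
Proof. by move=> H; rewrite /box inn_cons0 //=; case: c => [|[|c]]. Qed.

Lemma box_consS b r c : size a <= size b -> box a (1 :: b) r.+1 c = box a b r c.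
Proof. by move=> H; rewrite /box inn_consS. Qed.

Lemma Cont_step x b b' : Cont b -> t_op x b = Some b' -> Cont b'.
Proof.
move=> [Hs Hc] /t_opS [[_ ->]|[H1 [Hk [Hn ->]]]].
  split=> /=; first lia.
  case=> [|r] Hr; first by rewrite inn_cons0.
  by rewrite inn_consS //=; apply: Hc.
split; first by rewrite size_set.
move=> r; rewrite size_set // => Hr; rewrite inn_set // nth_set_nth /=.
case: eqP => [->|_]; last exact: Hc.
have := Hc _ Hk; lia.
Qed.

Lemma Cont_base : Cont a.
Proof.
split=> // r Hr; rewrite /inn /Lg subnn ltn0 subn0 //.
Qed.

Lemma box_base r c : box a a r c = false.
Proof.
rewrite /box /inn /Lg subnn ltn0 subn0.
apply/negbTE; apply/negP => /and3P [_ H1 H2]; lia.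
Qed.
End Box2.

Lemma act_cons x w b : act (x :: w) b = obind (t_op x) (act w b).
Proof. by []. Qed.

Lemma act_cat u v b c : act v b = Some c -> act (u ++ v) b = act u c.
Proof. by move=> H; elim: u => [|x u IH] //=; rewrite IH. Qed.

Lemma act_consE x w b c : act (x :: w) b = Some c ->
  exists d, act w b = Some d /\ t_op x d = Some c.
Proof. by rewrite act_cons; case: (act w b) => //= d H; exists d. Qed.

Lemma sumn_set s k v : k < size s -> sumn (set_nth 0 s k v) + nth 0 s k = sumn s + v.
Proof.
elim: s k => [|y s IH] [|k] //= Hk; first lia.
have := IH k Hk; lia.
Qed.

Lemma t_op_sumn x b c : t_op x b = Some c -> sumn c = (sumn b).+1.
Proof.
move/t_opS=> [[_ ->]|[H1 [Hk [Hn ->]]]] /=; first lia.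
have := sumn_set x Hk; rewrite Hn; lia.
Qed.

Section Word.
Variable a : seq nat.

Lemma act_Cont w b : act w a = Some b -> Cont a b.
Proof.
elim: w b => [|x w IH] b /=; first by move=> [<-]; apply: Cont_base.
case E: (act w a) => [d|] //= H; exact: Cont_step (IH _ E) H.
Qed.

Lemma act_pos w b : act w a = Some b -> all (fun i => 0 < i) w.
Proof.
elim: w b => [|x w IH] b //= /act_consE [d [E H]].
by rewrite (t_op_pos H) (IH _ E).
Qed.

Lemma act_sumn w b : act w a = Some b -> sumn b = sumn a + size w.
Proof.
elim: w b => [|x w IH] b /=; first by move=> [<-]; lia.
case E: (act w a) => [d|] //= H; rewrite (t_op_sumn H) (IH _ E); lia.
Qed.

Lemma step_col x b c (Cb : Cont a b) : t_op x b = Some c ->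
  forall j, (exists r, box a c r j) <-> (j = x \/ exists r, box a b r j).
Proof.
case: Cb => Hs Hc.
move/t_opS=> [[-> ->]|[H1 [Hk [Hn ->]]]] j.
  split.
    case=> [[|r]]; first by rewrite box_cons0 // => /eqP; left.
    by rewrite box_consS // => H; right; exists r.
  case=> [->|[r Hr]]; first by exists 0; rewrite box_cons0.
  by exists r.+1; rewrite box_consS.
have Hi : inn a b (index x.-1 b) <= x.-1 by have := Hc _ Hk; rewrite Hn.
have Hx : 0 < x by lia.
split.
  case=> r; rewrite box_set // => /orP [H|/andP [_ /eqP ->]]; last by left.
  by right; exists r.
case=> [->|[r Hr]].
  by exists (index x.-1 b); rewrite box_set // !eqxx orbT.
by exists r; rewrite box_set // Hr.
Qed.

Lemma act_col w b : act w a = Some b ->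
  forall j, (exists r, box a b r j) <-> j \in w.
Proof.
elim: w b => [|x w IH] b /=.
  by move=> [<-] j; split => // [[r]]; rewrite box_base.
case E: (act w a) => [d|] //= H j.
rewrite (step_col (act_Cont E) H) in_cons (IH _ E).
split; first by case=> [->|->]; rewrite ?eqxx ?orbT.
by case/orP => [/eqP ->|->]; [left|right].
Qed.

End Word.

Lemma count_gt_iota c n : count (fun j => c < j) (iota 1 n) = n - c.
Proof.
elim: n => [|n IH] //.
have -> : iota 1 n.+1 = iota 1 n ++ [:: n.+1].
  by have := iotaD 1 n 1; rewrite addn1 add1n.
by rewrite count_cat IH /=; case: ltnP => H /=; lia.
Qed.

Lemma sumn_le s t : size s = size t ->
  (forall r, r < size s -> nth 0 t r <= nth 0 s r) -> sumn t <= sumn s.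
Proof.
elim: s t => [|x s IH] [|y t] //= [Hst] H.
have := H 0 isT; have := IH t Hst (fun r Hr => H r.+1 Hr) => /=; lia.
Qed.

Lemma sumn_lt s t r0 : size s = size t ->
  (forall r, r < size s -> nth 0 t r <= nth 0 s r) ->
  r0 < size s -> nth 0 t r0 < nth 0 s r0 -> sumn t < sumn s.
Proof.
elim: s t r0 => [|x s IH] [|y t] r0 //= [Hst] H.
have H1 := sumn_le Hst (fun r Hr => H r.+1 Hr).
have H0 := H 0 isT.
case: r0 => [|r0] Hr Hlt; first by simpl in *; lia.
have := IH t r0 Hst (fun r Hr => H r.+1 Hr) Hr Hlt; simpl in *; lia.
Qed.

Lemma sumn_diff s t : size s = size t ->
  (forall r, r < size s -> nth 0 t r <= nth 0 s r) ->
  sumn [seq nth 0 s i.-1 - nth 0 t i.-1 | i <- iota 1 (size s)] = sumn s - sumn t.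
Proof.
elim: s t => [|x s IH] [|y t] //= [Hst] H.
have H0 := H 0 isT.
have H1 : forall r, r < size s -> nth 0 t r <= nth 0 s r by move=> r Hr; exact: (H r.+1).
have Hle := sumn_le Hst H1.
rewrite -[2]/(1+1) iotaDl -map_comp.
rewrite (_ : map _ _ = map (fun i => nth 0 s i.-1 - nth 0 t i.-1) (iota 1 (size s))); last first.
  apply/eq_in_map => i; rewrite mem_iota => /andP [Hi _] /=.
  by case: i Hi.
rewrite (IH t Hst H1); simpl in *; lia.
Qed.

Section Skew.
Variable a : seq nat.

Lemma not_innerE b i j : 0 < i -> i <= size b -> 0 < j ->
  ~~ in_inner b a (i, j) = (inn a b i.-1 < j).
Proof.
rewrite /in_inner /inn /Lg /= => Hi Hb Hj.
rewrite Hb Hj /=.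
case: i Hi Hb => [|i] //= _ Hb.
case: (ltnP i (size b - size a)) => H.
  by have -> : (size b - size a < i.+1) = false by lia.
have -> : (size b - size a < i.+1) = true by lia.
have -> : (i.+1 - (size b - size a)).-1 = i - (size b - size a) by lia.
by rewrite /= -ltnNge.
Qed.

Definition pad b := nseq (Lg a b) 0 ++ a.

Lemma size_pad b : size a <= size b -> size (pad b) = size b.
Proof. rewrite /pad size_cat size_nseq /Lg; lia. Qed.

Lemma nth_pad b r : nth 0 (pad b) r = inn a b r.
Proof.
rewrite /pad /inn nth_cat size_nseq nth_nseq.
by case: ltnP.
Qed.

Lemma sumn_pad b : sumn (pad b) = sumn a.
Proof. by rewrite /pad sumn_cat sumn_nseq. Qed.

Lemma size_skew b : Cont a b -> size (skew_boxes b a) = sumn b - sumn a.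
Proof.
move=> [Hs Hc].
rewrite /skew_boxes size_filter count_flatten -map_comp.
rewrite (_ : map _ _ = map (fun i => nth 0 b i.-1 - nth 0 (pad b) i.-1) (iota 1 (size b))); last first.
  apply/eq_in_map => i; rewrite mem_iota => /andP [Hi1 Hi2] /=.
  rewrite count_map nth_pad.
  rewrite (eq_in_count (a2 := fun j => inn a b i.-1 < j)); last first.
    move=> j; rewrite mem_iota => /andP [Hj1 Hj2] /=.
    by rewrite not_innerE //; lia.
  exact: count_gt_iota.
rewrite sumn_diff ?sumn_pad ?size_pad //.
by move=> r Hr; rewrite nth_pad; apply: Hc.
Qed.

End Skew.

Definition NC1 a b := forall r r', box a b r 1 -> box a b r 2 -> box a b r' 1 -> r' <= r.
Definition NC2 a b := forall r r' j, 2 <= j -> box a b r j -> box a b r j.+1 ->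
  box a b r' j -> r <= r'.

Lemma supp_box a b j : in_supp b a j <-> exists r, box a b r j.
Proof.
split.
  by case=> i; rewrite in_skewE => /andP [_ H]; exists i.-1.
by case=> r H; exists r.+1; rewrite in_skewE.
Qed.

Lemma nc_iff a b : nc_border_strip b a <-> interval_shape b a /\ NC1 a b /\ NC2 a b.
Proof.
rewrite /nc_border_strip /NC1 /NC2.
split; case=> Hi [H1 H2]; split=> //; split.
- move=> r r' A B C.
  have := H1 r.+1; rewrite !in_skewE /= => /(_ A B r'.+1); rewrite in_skewE /=.
  by move=> /(_ C).
- move=> r r' j Hj A B C.
  have := H2 r.+1 j Hj; rewrite !in_skewE /= => /(_ A B r'.+1); rewrite in_skewE /=.
  by move=> /(_ C).
- move=> i; rewrite !in_skewE => /andP [Pi A] /andP [_ B] i'; rewrite in_skewE.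
  move=> /andP [Pi' C]; have := H1 _ _ A B C; lia.
- move=> i j Hj; rewrite !in_skewE => /andP [Pi A] /andP [_ B] i'; rewrite in_skewE.
  move=> /andP [Pi' C]; have := H2 _ _ _ Hj A B C; lia.
Qed.

Lemma index_nth_first (g : seq nat) k : k < size g ->
  (forall i, i < k -> nth 0 g i != nth 0 g k) -> index (nth 0 g k) g = k.
Proof.
move=> Hk Hb.
have Hin : nth 0 g k \in g by apply: mem_nth.
case: (ltngtP (index (nth 0 g k) g) k) => // H.
  by have := Hb _ H; rewrite nth_index // => /eqP.
have := @before_find _ 0 (pred1 (nth 0 g k)) g k H.
by rewrite /= eqxx.
Qed.

Lemma t_op_eq x g : 1 < x ->
  t_op x g = if x.-1 \in g then Some (set_nth 0 g (index x.-1 g) x) else None.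
Proof.
case: x => [|[|i]] //= _.
by case: ifP => // H; rewrite nth_index.
Qed.

Lemma comp_step x g d : composition g -> t_op x g = Some d -> composition d.
Proof.
rewrite /composition => Hg /t_opS [[_ ->]|[H1 [Hk [Hn ->]]]] //=.
have : 0 < x by lia.
move: Hk; elim: g (index x.-1 g) Hg {Hn} => [|y g IH] [|k] //= /andP [Hy Hg] Hk Hx.
  by rewrite Hx Hg.
by rewrite Hy IH.
Qed.

Lemma t_cover x g d : t_op x g = Some d -> cover_c g d.
Proof.
move/t_opS => [[_ ->]|[H1 [Hk [Hn ->]]]]; first by left.
right; exists (index x.-1 g); split=> //; split.
  move=> i Hi; rewrite Hn.
  have := @before_find _ 0 (pred1 x.-1) g i Hi.
  by rewrite /= => ->.
by rewrite Hn; congr set_nth; lia.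
Qed.

Lemma cover_t g d : composition g -> cover_c g d -> exists x, t_op x g = Some d.
Proof.
move=> Hg [->|[k [Hk [Hb ->]]]]; first by exists 1.
exists (nth 0 g k).+1.
have Hp : 0 < nth 0 g k by exact: (allP Hg) _ (mem_nth 0 Hk).
rewrite t_op_eq /=; last lia.
by rewrite mem_nth // index_nth_first.
Qed.

Lemma ltc_word g d : lt_c g d -> composition g ->
  composition d /\ exists v, 0 < size v /\ act v g = Some d.
Proof.
elim=> [x y Hc Hx|x y z _ IH1 _ IH2 Hx].
  have [w Hw] := cover_t Hx Hc.
  split; first exact: comp_step Hw.
  by exists [:: w]; rewrite /= Hw.
have [Hy [v1 [Hv1 E1]]] := IH1 Hx.
have [Hz [v2 [Hv2 E2]]] := IH2 Hy.
split=> //; exists (v2 ++ v1); split; first by rewrite size_cat; lia.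
by rewrite (act_cat _ E1).
Qed.

Lemma word_ltc v g d : 0 < size v -> act v g = Some d -> lt_c g d.
Proof.
elim: v d => [|x v IH] d //= _.
case E: (act v g) => [e|] //= H.
case: v IH E => [|y v] IH E.
  by move: E H => /= [<-] H; apply: t_step; apply: t_cover H.
apply: t_trans (IH e isT E) (t_step _ _ _ _ (t_cover H)).
Qed.

Lemma idx_le (b : seq nat) y r : nth 0 b r = y -> r < size b -> index y b <= r.
Proof.
move=> Hn Hr; rewrite leqNgt; apply/negP => H.
have := @before_find _ 0 (pred1 y) b r H.
by rewrite /= Hn eqxx.
Qed.

Section Inv.
Variable a : seq nat.

Lemma step2 x b c : Cont a b -> t_op x b = Some c -> 1 < x ->
  exists k, [/\ k < size b, nth 0 b k = x.-1,
    (forall r, r < size b -> nth 0 b r = x.-1 -> k <= r),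
    size c = size b &
    ((forall r j, box a c r j = box a b r j || ((r == k) && (j == x))) /\
     (forall r, nth 0 c r = if r == k then x else nth 0 b r))].
Proof.
move=> [Hs Hc] /t_opS [[-> _]|[H1 [Hk [Hn ->]]]] // _.
exists (index x.-1 b); split=> //.
- by move=> r Hr Hnr; apply: idx_le.
- by rewrite size_set.
split.
  move=> r j; apply: box_set => //; last lia.
  by have := Hc _ Hk; rewrite Hn.
by move=> r; rewrite nth_set_nth.
Qed.

Lemma step1 b c : Cont a b -> t_op 1 b = Some c ->
  [/\ c = 1 :: b, (forall j, box a c 0 j = (j == 1)),
      (forall r j, box a c r.+1 j = box a b r j) & size c = (size b).+1].
Proof.
move=> [Hs Hc] [<-]; split=> //.
  by move=> j; rewrite box_cons0.
by move=> r j; rewrite box_consS.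
Qed.

Lemma box_col0 b r : box a b r 0 = false.
Proof. by rewrite /box ltn0 andbF. Qed.

Lemma box_size b r j : box a b r j -> r < size b.
Proof. by case/andP. Qed.

Lemma box_nth b r j : box a b r j -> j <= nth 0 b r.
Proof. by case/and3P. Qed.

Definition Uniq e b := forall r r' c, c < e -> box a b r c -> box a b r' c -> r = r'.
Definition Below e b := forall r r' c, 2 <= c -> c <= e -> box a b r c ->
  r' < size b -> nth 0 b r' = c.-1 -> r < r'.
Definition INV e b := [/\ NC1 a b, NC2 a b, Uniq e b & Below e b].
Definition AI d b :=
  [/\ (forall r r' c, box a b r c -> box a b r' c -> r = r'),
      (forall r c, box a b r c -> c <= d) &
      (forall r r' c, 2 <= c -> box a b r c -> r' < size b -> nth 0 b r' = c.-1 -> r < r')].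

Lemma AI_base : AI 0 a.
Proof. by split=> [r r' c|r c|r r' c _]; rewrite box_base. Qed.

Lemma AI_INV d e b : AI d b -> INV e b.
Proof.
case=> Hu Hb Hc; split.
- by move=> r r' A _ C; rewrite (Hu _ _ _ A C).
- by move=> r r' j _ A _ C; rewrite (Hu _ _ _ A C).
- by move=> r r' c _; apply: Hu.
- by move=> r r' c H2 _; apply: Hc.
Qed.

Lemma AI_step d x b c : Cont a b -> AI d b -> d < x -> t_op x b = Some c -> AI x c.
Proof.
move=> Cb [Hu Hb Hc] Hdx Ht.
case: (ltnP 1 x) => Hx.
  have [k [Hk Hnk Hmin Hsz [Hbox Hnth]]] := step2 Cb Ht Hx.
  split.
  - move=> r r' j; rewrite !Hbox.
    case/orP=> [A|/andP [/eqP Er /eqP Ej]]; case/orP=> [B|/andP [/eqP Er' /eqP Ej']].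
    + exact: Hu A B.
    + by have := Hb _ _ A; lia.
    + by have := Hb _ _ B; lia.
    + by rewrite Er Er'.
  - move=> r j; rewrite Hbox; case/orP=> [A|/andP [_ /eqP ->]] //.
    by have := Hb _ _ A; lia.
  - move=> r r' j H2; rewrite Hbox Hsz Hnth.
    case/orP=> [A|/andP [/eqP -> /eqP ->]] Hr'.
      case: eqP => [E|Ne] Hn.
        by have := Hb _ _ A; lia.
      exact: Hc A Hr' Hn.
    case: eqP => [E|Ne] Hn; first lia.
    by have := Hmin _ Hr' Hn; case: ltngtP Ne => // ->.
have Ex : x = 1 by lia.
rewrite Ex in Ht.
have Hd : d = 0 by lia.
have Hnb : forall r j, box a b r j = false.
  move=> r j; apply/negP => A; have := Hb _ _ A; rewrite Hd.
  case: j A => [|j]; [by rewrite box_col0 | by []].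
have [Ec H0 HS Hsz] := step1 Cb Ht.
split.
- move=> [|r] [|r'] j; rewrite ?H0 ?HS ?Hnb //.
- move=> [|r] j; rewrite ?H0 ?HS ?Hnb // => /eqP ->; lia.
- move=> [|r] r' j H2; rewrite ?H0 ?HS ?Hnb //.
  by case: eqP => // E; lia.
Qed.

Lemma INV_step e x b c : Cont a b -> INV e b -> x <= e -> t_op x b = Some c -> INV x c.
Proof.
move=> Cb [N1 N2 Hu Hbl] Hxe Ht.
case: (ltnP 1 x) => Hx.
  have [k [Hk Hnk Hmin Hsz [Hbox Hnth]]] := step2 Cb Ht Hx.
  have Hbk : forall j, x < j -> box a b k j = false.
    by move=> j Hj; apply/negP => /box_nth; rewrite Hnk; lia.
  split.
  - move=> r r'; rewrite !Hbox.
    have -> : (1 == x) = false by apply/eqP; lia.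
    rewrite !andbF !orbF => A.
    case/orP=> [B|/andP [/eqP Er /eqP E2]] C; first exact: N1 A B C.
    by rewrite (Hu r' r 1) //; lia.
  - move=> r r' j H2; rewrite !Hbox.
    case/orP=> [A|/andP [/eqP Er /eqP Ej]]; last first.
      by rewrite Er Ej Hbk // (_ : (x.+1 == x) = false) ?andbF //; apply/eqP; lia.
    case/orP=> [B|/andP [/eqP Er /eqP Ej]].
      case/orP=> [C|/andP [/eqP Er' /eqP Ej']]; first exact: N2 H2 A B C.
      rewrite Er'; apply: ltnW; apply: (Hbl r k j H2) => //; first lia.
      by rewrite Hnk Ej'.
    have Hj : j = x.-1 by lia.
    rewrite (_ : (j == x) = false) ?andbF ?orbF; last by apply/eqP; lia.
    move=> C; rewrite (Hu r r' j) //; lia.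
  - move=> r r' j Hj; rewrite !Hbox.
    rewrite (_ : (j == x) = false) ?andbF ?orbF; last by apply/eqP; lia.
    by apply: Hu; lia.
  - move=> r r' j H2 Hjx; rewrite Hbox Hsz Hnth.
    case/orP=> [A|/andP [/eqP -> /eqP ->]] Hr'.
      case: eqP => [E|Ne] Hn; first lia.
      by apply: (Hbl r r' j) => //; lia.
    case: eqP => [E|Ne] Hn; first lia.
    by have := Hmin _ Hr' Hn; case: ltngtP Ne => // ->.
have Ex : x = 1 by have := t_op_pos Ht; lia.
rewrite Ex in Ht.
have [Ec H0 HS Hsz] := step1 Cb Ht.
split.
- move=> [|r] [|r']; rewrite ?H0 ?HS //.
  by move=> A B C; have := N1 _ _ A B C.
- move=> [|r] [|r'] j H2; rewrite ?H0 ?HS; try by case: eqP => //; lia.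
  by move=> A B C; have := N2 _ _ _ H2 A B C.
- move=> r r' j Hj; have -> : j = 0 by lia.
  by case: r => [|r]; rewrite ?H0 ?HS ?box_col0.
- move=> r r' j H2 Hj; lia.
Qed.

End Inv.

Lemma mem_sumn (s : seq nat) x : x \in s -> x <= sumn s.
Proof.
elim: s => [|y s IH] //=; rewrite in_cons => /orP [/eqP ->|H]; first lia.
have := IH H; lia.
Qed.

Lemma act_none u v b : act v b = None -> act (u ++ v) b = None.
Proof. by move=> H; elim: u => [|x u IH] //=; rewrite IH. Qed.

Section Fwd.
Variable a : seq nat.

Lemma actG_Cont w g b : Cont a g -> act w g = Some b -> Cont a b.
Proof.
move=> Cg; elim: w b => [|x w IH] b /=; first by move=> [<-].
case E: (act w g) => [d|] //= H; exact: Cont_step (IH _ E) H.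
Qed.

Lemma phaseA T b : sorted (fun x y => y < x) T -> act T a = Some b ->
  AI a (head 0 T) b.
Proof.
elim: T b => [|x T IH] b /=; first by move=> _ [<-]; apply: AI_base.
move=> Hs; case E: (act T a) => [d|] //= H.
have Hs' : sorted (fun x y => y < x) T by case: T Hs {IH E} => //= y T /andP [].
apply: (AI_step (act_Cont E) (IH _ Hs' E)) (H).
case: T Hs {IH E Hs'} => [|y T] /=; first by have := t_op_pos H.
by case/andP.
Qed.

Lemma phaseB e H g b : sorted leq H -> (forall x, x \in H -> x <= e) ->
  Cont a g -> INV a e g -> act H g = Some b -> INV a (head e H) b.
Proof.
elim: H b => [|x H IH] b /=; first by move=> _ _ _ I [<-].
move=> Hs Hle Cg I; case E: (act H g) => [d|] //= Ht.
have Hs' : sorted leq H by move: Hs; case: (H) => //= y H' /andP [].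
have Hle' : forall y, y \in H -> y <= e by move=> y Hy; apply: Hle; rewrite in_cons Hy orbT.
apply: (INV_step (actG_Cont Cg E) (IH _ Hs' Hle' Cg I E)) (Ht).
case: H Hs Hle {IH E Hs' Hle'} => [|y H] /= Hs Hle.
  by apply: Hle; rewrite in_cons eqxx.
by case/andP: Hs.
Qed.

Lemma fwd n w b : CRHW n w -> act w a = Some b ->
  [/\ lt_c a b, nc_border_strip b a & size (skew_boxes b a) = n].
Proof.
move=> [Hsz [Hpos [[k [Hk [Hh Ht]]] Hconn]]] E.
have Hn : 0 < size w by lia.
split.
- exact: word_ltc Hn E.
- apply/nc_iff; split.
    move=> j1 j j2 /supp_box /(act_col E) H1 /supp_box /(act_col E) H2 Hj.
    by apply/supp_box/(act_col E); apply: Hconn H1 H2 Hj.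
  have Ew : w = take k w ++ drop k w by rewrite cat_take_drop.
  have HsH : sorted leq (take k w).
    by rewrite -(take_takel _ (leqnSn k)); apply: take_sorted.
  case E2 : (act (drop k w) a) => [g|]; last first.
    by move: E; rewrite Ew (act_none (take k w) E2).
  have E1 : act (take k w) g = Some b by rewrite -(act_cat _ E2) -Ew.
  have HA := phaseA Ht E2.
  have HI := phaseB (e := sumn (take k w)) HsH (fun x => @mem_sumn _ x)
    (act_Cont E2) (AI_INV _ HA) E1.
  by case: HI.
- by rewrite (size_skew (act_Cont E)) (act_sumn E); lia.
Qed.

End Fwd.

Definition F1 a b := forall r r' j, 1 < j -> box a b r j -> r' < size b ->
  inn a b r' = j.-1 -> nth 0 b r' = j.-1 -> r < r'.

Lemma F1_step a x b c : Cont a b -> F1 a b -> t_op x b = Some c -> F1 a c.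
Proof.
move=> Cb F Ht.
case: (ltnP 1 x) => Hx.
  have [k [Hk Hnk Hmin Hsz [Hbox Hnth]]] := step2 Cb Ht Hx.
  have Hinn : forall r, inn a c r = inn a b r.
    by move=> r; case/t_opS: Ht => [[E _]|[_ [Hk' [_ ->]]]]; [lia| rewrite inn_set].
  move=> r r' j Hj; rewrite Hbox Hsz Hinn Hnth.
  case/orP=> [A|/andP [/eqP -> /eqP ->]] Hr' Hi.
    case: eqP => [E|Ne] Hn.
      by case: Cb => _ Hc; have := Hc _ Hr'; rewrite Hi E Hnk; lia.
    exact: F A Hr' Hi Hn.
  case: eqP => [E|Ne] Hn; first lia.
  by have := Hmin _ Hr' Hn; case: ltngtP Ne => // ->.
have Ex : x = 1 by have := t_op_pos Ht; lia.
rewrite Ex in Ht.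
have [Ec H0 HS Hsz] := step1 Cb Ht.
have Hs : size a <= size b by case: Cb.
move=> [|r] r' j Hj; rewrite ?H0 ?HS; first by case: eqP => //; lia.
rewrite Ec => A; case: r' => [|r'] /=.
  by rewrite inn_cons0 //; lia.
by rewrite inn_consS // => Hr' Hi Hn; have := F _ _ _ Hj A Hr' Hi Hn.
Qed.

Lemma act_F1 a w b : act w a = Some b -> F1 a b.
Proof.
elim: w b => [|x w IH] b /=.
  by move=> [<-] r r' j _; rewrite box_base.
case E: (act w a) => [d|] //= H; exact: F1_step (act_Cont E) (IH _ E) H.
Qed.

Definition crossb a b j := has (fun r => box a b r j && box a b r j.+1) (iota 0 (size b)).
Definition hasb a b j := has (fun r => box a b r j) (iota 0 (size b)).

Lemma crossP a b j : reflect (exists r, box a b r j /\ box a b r j.+1) (crossb a b j).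
Proof.
apply: (iffP hasP) => [[r _ /andP [A B]]|[r [A B]]]; first by exists r.
by exists r; [rewrite mem_iota (box_size A) | rewrite A B].
Qed.

Lemma hasbP a b j : reflect (exists r, box a b r j) (hasb a b j).
Proof.
apply: (iffP hasP) => [[r _ A]|[r A]]; first by exists r.
by exists r; [rewrite mem_iota (box_size A) | rewrite A].
Qed.

Lemma NC1_mono a b a1 b1 f : (forall r c, box a1 b1 r c -> box a b (f r) c) ->
  (forall r r', f r <= f r' -> r <= r') -> NC1 a b -> NC1 a1 b1.
Proof. by move=> Hb Hf N r r' A B C; apply: Hf; apply: N; apply: Hb. Qed.

Lemma NC2_mono a b a1 b1 f : (forall r c, box a1 b1 r c -> box a b (f r) c) ->
  (forall r r', f r <= f r' -> r <= r') -> NC2 a b -> NC2 a1 b1.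
Proof. by move=> Hb Hf N r r' j Hj A B C; apply: Hf; apply: (N _ _ j) => //; apply: Hb. Qed.

Lemma comp_pos (s : seq nat) k : composition s -> k < size s -> 0 < nth 0 s k.
Proof. by move=> C Hk; exact: (allP C) _ (mem_nth 0 Hk). Qed.

Lemma comp_set (s : seq nat) k v : k < size s -> composition s -> 0 < v ->
  composition (set_nth 0 s k v).
Proof.
rewrite /composition.
elim: s k => [|y s IH] [|k] //= Hk /andP [Hy Hs] Hv.
- by rewrite Hv Hs.
- by rewrite Hy IH.
Qed.

Lemma set_nth_id (s : seq nat) k : k < size s -> set_nth 0 s k (nth 0 s k) = s.
Proof.
move=> Hk; apply: (@eq_from_nth _ 0); first by rewrite size_set.
by move=> i _; rewrite nth_set_nth /=; case: eqP => // ->.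
Qed.

Lemma inn_pad a b r : r < Lg a b -> inn a b r = 0.
Proof. by rewrite /inn => ->. Qed.

Lemma inn_main a b r : composition a -> Lg a b <= r -> r < size b -> size a <= size b ->
  0 < inn a b r.
Proof.
move=> Ca H1 H2 H3; rewrite /inn.
have -> : (r < Lg a b) = false by apply/negbTE; rewrite -leqNgt.
apply: comp_pos => //; rewrite /Lg in H1 *; lia.
Qed.

Lemma inn_acons a b r : 0 < Lg a b ->
  inn (1 :: a) b r = if r == (Lg a b).-1 then 1 else inn a b r.
Proof.
rewrite /inn /Lg /= => H.
have -> : size b - (size a).+1 = (size b - size a).-1 by lia.
case: eqP => [->|Ne].
  by rewrite ltnn subnn.
case: ltnP => H1.
  by have -> : r < size b - size a by lia.
have H2 : size b - size a <= r by lia.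
rewrite ltnNge H2 /=.
have -> : r - (size b - size a).-1 = (r - (size b - size a)).+1 by lia.
by [].
Qed.

Lemma inn_aset a b k v r : k < size a ->
  inn (set_nth 0 a k v) b r = if r == Lg a b + k then v else inn a b r.
Proof.
move=> Hk; rewrite /inn /Lg size_set //.
case: ltnP => H1.
  by case: eqP => // E; lia.
rewrite nth_set_nth /=.
case: eqP => [E|Ne]; case: eqP => [E'|Ne'] //; lia.
Qed.

Lemma nobox_eq a b : composition a -> composition b -> Cont a b ->
  (forall r c, box a b r c = false) -> b = a.
Proof.
move=> Ca Cb [Hs Hc] Hno.
have Heq : forall r, r < size b -> nth 0 b r = inn a b r.
  move=> r Hr; have := Hc _ Hr; have := Hno r (nth 0 b r).
  by rewrite /box Hr leqnn andbT /= => /negbT; rewrite -leqNgt; lia.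
have HL : Lg a b = 0.
  case: (posnP (Lg a b)) => // HL.
  have Hb0 : 0 < size b by rewrite /Lg in HL; lia.
  have := Heq 0 Hb0; rewrite inn_pad // => E.
  by have := comp_pos Cb Hb0; rewrite E.
have Hsz : size b = size a by rewrite /Lg in HL; lia.
apply: (@eq_from_nth _ 0) => // r Hr.
by rewrite Heq // /inn HL subn0.
Qed.

Lemma box_sumn a b r c : Cont a b -> box a b r c -> sumn a < sumn b.
Proof.
move=> [Hs Hc] A; rewrite -(sumn_pad a b).
apply: (sumn_lt (r0 := r)); first by rewrite size_pad.
- by move=> i Hi; rewrite nth_pad; apply: Hc.
- exact: box_size A.
- by rewrite nth_pad; case/and3P: A => _ H1 H2; lia.
Qed.

Lemma Cont_sumn a b : Cont a b -> sumn a <= sumn b.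
Proof.
move=> [Hs Hc]; rewrite -(sumn_pad a b).
apply: sumn_le; first by rewrite size_pad.
by move=> i Hi; rewrite nth_pad; apply: Hc.
Qed.

Definition PI a b := [/\ composition a, composition b, Cont a b, F1 a b & (NC1 a b /\ NC2 a b)].

Lemma box_inc a a1 b p j0 : inn a b p = j0.-1 -> 0 < j0 -> size a1 <= size b ->
  (forall r, inn a1 b r = if r == p then j0 else inn a b r) ->
  forall r c, box a1 b r c = box a b r c && ~~ ((r == p) && (c == j0)).
Proof.
move=> Hp Hj Hs Hi r c; rewrite /box Hi.
case: eqP => [->|_] /=; last by rewrite andbT.
rewrite Hp /=; case: (p < size b) => //=.
case: eqP => [->|Ne] /=; first by rewrite ltnn andbF.
rewrite andbT; case: (c <= nth 0 b p); rewrite ?andbT ?andbF //.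
apply/idP/idP; lia.
Qed.

Lemma D_gen a a1 b p j0 : PI a b -> box a b p j0 -> box a b p j0.+1 ->
  inn a b p = j0.-1 -> 0 < j0 -> size a1 <= size b ->
  (forall r, inn a1 b r = if r == p then j0 else inn a b r) ->
  t_op j0 a = Some a1 ->
  [/\ PI a1 b, sumn a1 = (sumn a).+1, (exists r, box a1 b r j0.+1),
      (forall x, crossb a1 b x -> crossb a b x /\ x != j0) &
      (forall r c, box a b r c -> box a1 b r c \/ c = j0)].
Proof.
move=> [Ca Cb [Hs Hc] F [N1 N2]] A B Hp Hj Hsz Hi Ht.
have Hb := box_inc Hp Hj Hsz Hi.
have Hmono : forall r c, box a1 b r c -> box a b r c by move=> r c; rewrite Hb => /andP [].
have Hpb : j0.+1 <= nth 0 b p := box_nth B.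
split.
- split=> //.
  + exact: comp_step Ca Ht.
  + split=> // r Hr; rewrite Hi; case: eqP => [->|_]; [lia|exact: Hc].
  + move=> r r' j Hj1 A1 Hr' Hi' Hn; have A0 := Hmono _ _ A1.
    move: Hi'; rewrite Hi; case: eqP => [E|_] Hi'.
      by rewrite E in Hn; lia.
    exact: F A0 Hr' Hi' Hn.
  + split.
      by apply: (NC1_mono (f := id) Hmono).
    by apply: (NC2_mono (f := id) Hmono).
- exact: t_op_sumn Ht.
- by exists p; rewrite Hb B eqxx /= (_ : (j0.+1 == j0) = false) //; apply/eqP; lia.
- move=> x /crossP [y [Y1 Y2]]; split.
    by apply/crossP; exists y; split; apply: Hmono.
  apply/eqP => Ex; rewrite Ex in Y1 Y2.
  have Y1' := Hmono _ _ Y1; have Y2' := Hmono _ _ Y2.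
  have Eyp : y = p.
    case: (ltnP 1 j0) => Hj2.
      have := N2 _ _ _ Hj2 A B Y1'; have := N2 _ _ _ Hj2 Y1' Y2' A; lia.
    have E1 : j0 = 1 by lia.
    rewrite E1 in A B Y1' Y2'.
    have := N1 _ _ A B Y1'; have := N1 _ _ Y1' Y2' A; lia.
  by move: Y1; rewrite Hb Eyp !eqxx /= andbF.
- move=> r c H; rewrite Hb H /=.
  by case: eqP => [_|]; case: eqP => [->|] /=; auto.
Qed.

Lemma D_step a b j0 : PI a b -> crossb a b j0 ->
  (forall j, crossb a b j -> j0 <= j) ->
  exists a1, [/\ PI a1 b, sumn a1 = (sumn a).+1, act [:: j0] a = Some a1,
      (exists r, box a1 b r j0.+1) &
      ((forall x, crossb a1 b x -> crossb a b x /\ j0 < x) /\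
       (forall r c, box a b r c -> box a1 b r c \/ c = j0))].
Proof.
move=> PP /crossP [p [A B]] Hmin.
have PP' := PP; case: PP' => Ca Cb [Hs Hc] F [N1 N2].
have Hp : p < size b := box_size A.
have Hlt : inn a b p < j0 by case/and3P: A.
have Hle : j0 <= nth 0 b p := box_nth A.
have Hj : 0 < j0 by lia.
have Hip : inn a b p = j0.-1.
  case: (ltnP (inn a b p) j0.-1) => H; last lia.
  have : crossb a b j0.-1.
    apply/crossP; exists p; split; first by rewrite /box Hp H /=; lia.
    by rewrite prednK.
  by move/Hmin; lia.
suff [a1 [Hsz Hi Ht]] : exists a1, [/\ size a1 <= size b,
    (forall r, inn a1 b r = if r == p then j0 else inn a b r) &
    t_op j0 a = Some a1].
  have [P1 S1 X1 C1 B1] := D_gen PP A B Hip Hj Hsz Hi Ht.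
  exists a1; split=> //.
  split=> // x Hx; have [H1 H2] := C1 _ Hx; split=> //.
  by have := Hmin _ H1; rewrite leq_eqVlt eq_sym (negbTE H2).
case: (ltnP 1 j0) => Hj2; last first.
  have Ej : j0 = 1 by lia.
  rewrite Ej in Hip A B Hle Hlt *.
  have HpL : p < Lg a b.
    rewrite ltnNge; apply/negP => H.
    by have := inn_main Ca H Hp Hs; rewrite Hip.
  have HL : 0 < Lg a b by lia.
  have HpE : p = (Lg a b).-1.
    have Hb1 : box a b (Lg a b).-1 1.
      have Hr : (Lg a b).-1 < size b by rewrite /Lg in HL *; lia.
      rewrite /box Hr inn_pad /=; last lia.
      exact: comp_pos Cb Hr.
    have := N1 _ _ A B Hb1; lia.
  exists (1 :: a); split=> //.
  - by rewrite /Lg in HL *; simpl; lia.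
  - by move=> r; rewrite inn_acons // HpE.
have HpL : Lg a b <= p.
  rewrite leqNgt; apply/negP => H; rewrite inn_pad // in Hip; lia.
set k := p - Lg a b.
have Hk : k < size a by rewrite /k /Lg in HpL *; lia.
have Hnk : nth 0 a k = j0.-1 by rewrite -Hip /inn ltnNge HpL.
have Hfirst : forall i, i < k -> nth 0 a i != nth 0 a k.
  move=> i Hik; apply/negP => /eqP Ei.
  set y := Lg a b + i.
  have Hy : y < size b by rewrite /y /k in Hik *; lia.
  have Hiy : inn a b y = j0.-1.
    by rewrite /inn /y ltnNge leq_addr /= addKn Ei.
  have Hcy := Hc _ Hy; rewrite Hiy in Hcy.
  case: (eqVneq (nth 0 b y) j0.-1) => Hny.
    have := F _ _ _ Hj2 A Hy Hiy Hny; rewrite /y /k in Hik *; lia.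
  have By : box a b y j0 by rewrite /box Hy Hiy /=; lia.
  have := N2 _ _ _ Hj2 A B By; rewrite /y /k in Hik *; lia.
exists (set_nth 0 a k j0); split.
- by rewrite size_set.
- by move=> r; rewrite inn_aset // /k subnKC.
- rewrite t_op_eq // -Hnk mem_nth // index_nth_first //.
Qed.

Lemma B_step a b m : PI a b -> (forall j, ~~ crossb a b j) -> hasb a b m ->
  (forall j, hasb a b j -> m <= j) ->
  exists b1, [/\ PI a b1, sumn b = (sumn b1).+1, t_op m b1 = Some b,
     (forall x, crossb a b1 x -> crossb a b x) &
     ((forall j, hasb a b1 j -> hasb a b j) /\
      (forall r c, box a b r c -> c = m \/ exists r', box a b1 r' c))].
Proof.
move=> [Ca Cb [Hs Hc] F [N1 N2]] Hnc /hasbP [r1 A1] Hmin.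
have Hm : 0 < m by move: A1; case: (m) => [|m']; rewrite ?box_col0.
case: (ltnP 1 m) => Hm2; last first.
  have Em : m = 1 by lia.
  rewrite Em in A1 *.
  have Hr1 : r1 < size b := box_size A1.
  have HL : r1 < Lg a b.
    rewrite ltnNge; apply/negP => H.
    by have := inn_main Ca H Hr1 Hs; case/and3P: A1 => _ H1 _; lia.
  case Eb : b => [|x0 b1]; first by rewrite Eb in Hr1.
  have Hx0 : x0 = 1.
    have Hb0 : 0 < size b by lia.
    have Hi0 : inn a b 0 = 0 by apply: inn_pad; lia.
    have := comp_pos Cb Hb0; rewrite Eb /= => Hx.
    have := Hnc 1; apply: contraNeq => Hne; apply/crossP; exists 0.
    rewrite /box Hb0 Hi0 Eb /=; lia.
  subst x0 b.
  have Hs1 : size a <= size b1 by rewrite /Lg /= in HL; lia.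
  exists b1; split=> //.
  - split=> //.
    + split=> // r Hr; have := Hc r.+1 Hr; rewrite inn_consS //.
    + move=> r r' j Hj A Hr' Hi Hn.
      have := F r.+1 r'.+1 j Hj; rewrite box_consS // inn_consS //= => /(_ A Hr' Hi Hn).
      done.
    + split.
        apply: (NC1_mono (f := S) _ _ N1) => [r c|r r'] /=; rewrite ?box_consS //.
      apply: (NC2_mono (f := S) _ _ N2) => [r c|r r'] /=; rewrite ?box_consS //.
  - move=> x /crossP [y [Y1 Y2]]; apply/crossP; exists y.+1.
    by rewrite !box_consS.
  - split.
      by move=> j /hasbP [y Y]; apply/hasbP; exists y.+1; rewrite box_consS.
    move=> [|r] c; first by rewrite box_cons0 // => /eqP; left.
    by rewrite box_consS // => H; right; exists r.
have Hbd : forall y, box a b y m -> y <= size b by move=> y /box_size; lia.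
have [r0 A0 Hmax] := ex_maxnP (ex_intro (fun y => box a b y m) r1 A1) Hbd.
have Hr0 : r0 < size b := box_size A0.
have Hn0 : nth 0 b r0 = m.
  have H1 := box_nth A0.
  have : ~~ box a b r0 m.+1.
    by have := Hnc m; apply: contra => H; apply/crossP; exists r0.
  by rewrite /box Hr0 /=; case/and3P: A0 => _ H2 _; rewrite (_ : inn a b r0 < m.+1) //=; lia.
set b1 := set_nth 0 b r0 m.-1.
have Hsz : size b1 = size b by rewrite size_set.
have Hin : forall r, inn a b1 r = inn a b r by move=> r; rewrite inn_set.
have Hnth : forall r, nth 0 b1 r = if r == r0 then m.-1 else nth 0 b r.
  by move=> r; rewrite nth_set_nth.
have Hir0 : inn a b r0 < m by case/and3P: A0.
have Hb : forall r c, box a b1 r c = box a b r c && ~~ ((r == r0) && (c == m)).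
  move=> r c; rewrite /box Hsz Hin Hnth.
  case: eqP => [->|_] /=; last by rewrite andbT.
  rewrite Hr0 Hn0 /=.
  case: eqP => [->|Ne] /=; first by rewrite andbF; apply/negbTE; lia.
  rewrite andbT; apply/idP/idP; lia.
have Hmono : forall r c, box a b1 r c -> box a b r c by move=> r c; rewrite Hb => /andP [].
exists b1; split.
- split=> //.
  + by apply: comp_set => //; lia.
  + split; first by rewrite Hsz.
    move=> r; rewrite Hsz => Hr; rewrite Hin Hnth.
    by case: eqP => [->|_]; [lia | apply: Hc].
  + move=> r r' j Hj A Hr' Hi Hn.
    rewrite Hsz in Hr'; rewrite Hin in Hi.
    move: Hn; rewrite Hnth; case: eqP => [E|Ne] Hn.
      have Ej : j = m by lia.
      move: A; rewrite Hb Ej => /andP [A Hne].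
      have Hle := Hmax _ A; rewrite E; move: Hne; rewrite eqxx andbT => Hne.
      by rewrite ltn_neqAle Hne Hle.
    exact: F (Hmono _ _ A) Hr' Hi Hn.
  + split.
      by apply: (NC1_mono (f := id) Hmono _ N1).
    by apply: (NC2_mono (f := id) Hmono _ N2).
- have := sumn_set m.-1 Hr0; rewrite Hn0 -/b1; lia.
- rewrite t_op_eq //.
  have Hn1 : nth 0 b1 r0 = m.-1 by rewrite Hnth eqxx.
  have Hr0' : r0 < size b1 by rewrite Hsz.
  rewrite -Hn1 mem_nth // index_nth_first //.
    rewrite /b1 set_set_nth eqxx -Hn0; congr Some.
    by rewrite set_nth_id.
  move=> i Hi; rewrite Hnth (_ : (i == r0) = false); last by apply/eqP; lia.
  rewrite Hn1; apply/eqP => Ei.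
  have Hir : i < size b by lia.
  case: (ltnP (inn a b i) m.-1) => Hii.
    have : hasb a b m.-1 by apply/hasbP; exists i; rewrite /box Hir Hii Ei /=.
    by move/Hmin; lia.
  have Hii' : inn a b i = m.-1 by have := Hc _ Hir; lia.
  by have := F _ _ _ Hm2 A0 Hir Hii' Ei; lia.
- move=> x /crossP [y [Y1 Y2]]; apply/crossP; exists y.
  by split; apply: Hmono.
- split.
    by move=> j /hasbP [y Y]; apply/hasbP; exists y; apply: Hmono.
  move=> r c H; case: (eqVneq r r0) => [Er|Ne].
    case: (eqVneq c m) => [->|Nc]; first by left.
    by right; exists r; rewrite Hb H Er eqxx (negbTE Nc).
  by right; exists r; rewrite Hb H (negbTE Ne).
Qed.

Lemma sorted_rcons_gt (s : seq nat) x : sorted (fun a b => b < a) s ->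
  (forall y, y \in s -> x < y) -> sorted (fun a b => b < a) (rcons s x).
Proof.
case: s => [|y s] //= Hs Hx.
rewrite rcons_path Hs /=; apply: Hx; exact: mem_last.
Qed.

Lemma Qlem N : forall a b, sumn b - sumn a <= N -> PI a b ->
  b = a \/ exists H T, [/\ 0 < size H, sorted leq H, sorted (fun x y => y < x) T,
    (forall x, x \in T -> crossb a b x) &
    ((forall r c, box a b r c -> c <= last 0 H) /\ act (H ++ T) a = Some b)].
Proof.
elim: N => [|N IH] a b HN PP; have PP' := PP; case: PP' => Ca Cb Cab F [N1 N2].
  case: (classic (exists r c, box a b r c)) => [[r [c Hb]]|Hno].
    by have := box_sumn Cab Hb; lia.
  left; apply: nobox_eq => // r c; apply/negP => H; by apply: Hno; exists r, c.
case: (classic (exists r c, box a b r c)) => [[r0 [c1 Hb]]|Hno]; last first.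
  left; apply: nobox_eq => // r c; apply/negP => H; by apply: Hno; exists r, c.
case: (classic (exists j, crossb a b j)) => [Hx|Hnx].
  case: (ex_minnP Hx) => j0 Hj0 Hmin.
  have [a1 [P1 S1 E1 [r' B1] [C1 M1]]] := D_step PP Hj0 Hmin.
  have HN1 : sumn b - sumn a1 <= N by rewrite S1; lia.
  case: (IH _ _ HN1 P1) => [Eb|[H [T [Hsz Hs HT Hcr [Hbx Hact]]]]].
    by move: B1; rewrite Eb box_base.
  right; exists H, (rcons T j0); split=> //.
  - apply: sorted_rcons_gt => // y Hy; exact: (C1 _ (Hcr _ Hy)).2.
  - move=> x; rewrite mem_rcons in_cons => /orP [/eqP ->|Hx'] //.
    exact: (C1 _ (Hcr _ Hx')).1.
  - split.
      move=> r2 c0 /M1 [B0|->]; first exact: Hbx B0.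
      by have := Hbx _ _ B1; lia.
    by rewrite -cats1 catA (act_cat _ E1).
have Hnc : forall j, ~~ crossb a b j.
  by move=> j; apply/negP => Hj; apply: Hnx; exists j.
have Hh : exists j, hasb a b j by exists c1; apply/hasbP; exists r0.
case: (ex_minnP Hh) => m Hm Hmin.
have [b1 [P1 S1 E1 C1 [Hh1 M1]]] := B_step PP Hnc Hm Hmin.
have HN1 : sumn b1 - sumn a <= N by lia.
case: (IH _ _ HN1 P1) => [Eb|[H [T [Hsz Hs HT Hcr [Hbx Hact]]]]].
  right; exists [:: m], [::]; split=> //.
  split; last by rewrite /= -Eb.
  by move=> r2 c0 /M1 [->|[r1]] //; rewrite Eb box_base.
have Hlet : forall x, x \in H ++ T -> m <= x.
  move=> x /(act_col Hact) [r1 B] ; apply: Hmin; apply: Hh1; apply/hasbP; exists r1.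
  exact: B.
right; exists (m :: H), T; split=> //.
- case: H Hsz Hs Hlet {Hbx Hact} => [|y H] //= _ Hs Hlet.
  by rewrite Hs andbT; apply: Hlet; rewrite in_cons eqxx.
- move=> x Hx; exact: C1 (Hcr _ Hx).
- split; last by rewrite /= Hact.
  have Hl : last 0 (m :: H) = last 0 H by case: H Hsz {Hs Hbx Hact Hlet}.
  rewrite Hl.
  have HlH : last 0 H \in H by case: H Hsz {Hs Hbx Hact Hlet Hl} => //= y H _; apply: mem_last.
  move=> r2 c0 /M1 [->|[r1 B]]; last exact: Hbx B.
  by apply: Hlet; rewrite mem_cat HlH.
Qed.

Theorem mainTheorem11 (alpha : seq nat) (n : nat) :
  composition alpha -> 1 <= n ->
  forall beta : seq nat,
    (exists w, CRHW n w /\ act w alpha = Some beta) <->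
    (lt_c alpha beta /\ nc_border_strip beta alpha /\
     size (skew_boxes beta alpha) = n).
Proof.
move=> Ca Hn beta; split.
  by case=> w [Hw E]; have [H1 H2 H3] := fwd Hw E.
case=> Hlt [Hnc Hsz].
have [Cb [v [Hv Ev]]] := ltc_word Hlt Ca.
have Cab := act_Cont Ev; have F := act_F1 Ev.
case/nc_iff: (Hnc) => Hint [N1 N2].
have PP : PI alpha beta by split.
case: (Qlem (leqnn _) PP) => [Eb|[H [T [HsH Hs HT Hcr [Hbx Hact]]]]].
  by move: Hsz; rewrite (size_skew Cab) Eb subnn; lia.
exists (H ++ T); split=> //.
split; last split; last split.
- by move: Hsz; rewrite (size_skew Cab) (act_sumn Hact); lia.
- exact: act_pos Hact.
- exists (size H).-1; split; first by rewrite size_cat; lia.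
  rewrite prednK // take_size_cat //; split=> //.
  case/lastP: H HsH Hs Hbx {Hact} => [|H0 l] //= _ _ Hbx.
  rewrite size_rcons /= -cats1 -catA drop_size_cat //= .
  case: T HT Hcr => [|y T] //= HT Hcr; rewrite HT andbT.
  have /crossP [r [_ B]] := Hcr y (mem_head _ _).
  by have := Hbx _ _ B; rewrite last_rcons.
- move=> x y z Hx Hz Hy.
  have [r1 B1] := (act_col Hact x).2 Hx.
  have [r2 B2] := (act_col Hact z).2 Hz.
  have : in_supp beta alpha y.
    by apply: (Hint x y z); [apply/supp_box; exists r1 | apply/supp_box; exists r2 |].
  by move/supp_box/(act_col Hact y).
Qed.
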